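(* Let $\mathcal{I}$ be a finite set of closed intervals whose start- and endpoints are pairwise distinct, let $k\ge1$, and let $X$ and $\mathcal{S}$ be produced by the construction described in the context. Then every element of $X$ occurs in at most two constraints of $\mathcal{S}$, and $\mathcal{S}$ can be partitioned into two classes such that every element of $X$ occurring in two constraints occurs in one constraint of each class. Consequently, the multigraph with vertex set $\mathcal{S}$ and one edge $\{S,S'\}$ for each element of $X$ lying in the two constraints $S\neq S'$ is bipartite, and its proper edge colorings with $k$ colors correspond to colorings of $X$ in which the elements of each constraint receive pairwise distinct colors.
   Context: Construction. The events are the start- and endpoints of the intervals, scanned in increasing order. We maintain a list of active events (initially empty), a growing ground set $X$ (initially $\mathcal{I}$) and a family $\mathcal{S}$ of constraints (tuples of elements of $X$, initially empty). Whenever the active list is empty, the type of the next event (start or end) fixes the type of the current phase. Start phase: startpoints are appended to the active list. (a) If the active list contains startpoints of $k$ elements $I_1,\dots,I_k$ (actual intervals or virtual elements), add the constraint $(I_1,\dots,I_k)$ and clear the active list. (b) If the active list contains startpoints of $I_1,\dots,I_j$ with $j<k$ and the next event is the endpoint of some interval $I_{j+1}$, create new virtual elements $x_{j+1},\dots,x_k,y_1,\dots,y_{j-1}$ (added to $X$, not used before), add the constraints $(I_1,\dots,I_j,x_{j+1},\dots,x_k)$ and $(y_1,\dots,y_{j-1},I_{j+1},x_{j+1},\dots,x_k)$, and replace the active list by the (virtual) startpoints of $y_1,\dots,y_{j-1}$ (phase remains a start phase; if $j=1$ the list becomes empty). End phase: symmetric, with the roles of start- and endpoints interchanged. A proper edge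 coloring of a multigraph with $k$ colors assigns colors in $\{1,\dots,k\}$ to edges so that any two distinct edges sharing an endpoint get distinct colors. *)

(* Defs.v *)
From HB Require Import structures.
From mathcomp Require Import all_boot all_order all_algebra.
Set Implicit Arguments. Unset Strict Implicit. Unset Printing Implicit Defensive.
Import Order.TTheory GRing.Theory Num.Theory.

(* Elements of the ground set X are natural numbers: 0 .. size I - 1 are the
   actual intervals, and virtual elements are fresh numbers >= size I.       *)

Local Open Scope ring_scope.

(* Events: (is_startpoint, interval index), sorted by coordinate. *)
Definition raw_events (R : realDomainType) (I : seq (R * R))
  : seq (R * (bool * nat)) :=
  flatten [seq let p := nth (0, 0) I i in
               [:: (p.1, (true, i)); (p.2, (false, i))] | i <- iota 0 (size I)].

Definition events (R : realDomainType) (I : seq (R * R)) : seq (bool * nat) :=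
  map snd (sort (fun a b : R * (bool * nat) => a.1 <= b.1) (raw_events I)).

Local Close Scope ring_scope.

(* State of the construction: next fresh virtual element, active list,
   type of the current phase (true = start phase), constraints so far. *)
Record cstate := CState {
  st_cnt : nat;
  st_act : seq nat;
  st_ph : bool;
  st_cstr : seq (seq nat) }.

Definition close_if_full (k : nat) (st : cstate) : cstate :=
  if size (st_act st) == k
  then CState (st_cnt st) [::] (st_ph st) (rcons (st_cstr st) (st_act st))
  else st.

Definition step (k : nat) (st : cstate) (e : bool * nat) : cstate :=
  let: (b, i) := e in
  if st_act st == [::] then
    close_if_full k (CState (st_cnt st) [:: i] b (st_cstr st))
  else if b == st_ph st then
    close_if_full k (CState (st_cnt st) (rcons (st_act st) i) (st_ph st) (st_cstr st))
  else
    let j := size (st_act st) in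
    let xs := iota (st_cnt st) (k - j) in
    let ys := iota (st_cnt st + (k - j)) j.-1 in
    CState (st_cnt st + (k - j) + j.-1) ys (st_ph st)
           (st_cstr st ++ [:: st_act st ++ xs; ys ++ i :: xs]).

Definition construction (R : realDomainType) (k : nat) (I : seq (R * R)) : cstate :=
  foldl (step k) (CState (size I) [::] true [::]) (events I).

Definition ground (R : realDomainType) (k : nat) (I : seq (R * R)) : seq nat :=
  iota 0 (st_cnt (construction k I)).

Definition constraints (R : realDomainType) (k : nat) (I : seq (R * R))
  : seq (seq nat) :=
  st_cstr (construction k I).

(* The multigraph on vertex set S (indexed by 'I_(size S)), with one edge for
   each element x of X lying in two distinct constraints; that edge is
   incident to the constraints containing x. *)
Definition is_edge (S : seq (seq nat)) (x : nat) : Prop :=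
  exists i j : 'I_(size S), i != j /\ x \in nth [::] S i /\ x \in nth [::] S j.

Definition mg_bipartite (S : seq (seq nat)) (X : seq nat) : Prop :=
  exists part : 'I_(size S) -> bool,
    forall x, x \in X -> is_edge S x ->
    forall i j : 'I_(size S), i != j ->
      x \in nth [::] S i -> x \in nth [::] S j -> part i != part j.

Definition proper_edge_coloring (k : nat) (S : seq (seq nat)) (X : seq nat)
  (f : nat -> 'I_k) : Prop :=
  forall x y, x \in X -> y \in X -> is_edge S x -> is_edge S y -> x != y ->
    (exists i : 'I_(size S), x \in nth [::] S i /\ y \in nth [::] S i) ->
    f x != f y.

Definition constraint_coloring (k : nat) (S : seq (seq nat)) (c : nat -> 'I_k)
  : Prop :=
  forall i : 'I_(size S), uniq (map c (nth [::] S i)).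

(* Main.v *)
Require Import Defs.
From HB Require Import structures.
From mathcomp Require Import all_boot all_order all_algebra zify.
Import Order.TTheory GRing.Theory Num.Theory.


Lemma uniq_map_inj (T1 T2 : eqType) (f : T1 -> T2) s x y :
  uniq (map f s) -> x \in s -> y \in s -> f x = f y -> x = y.
Proof.
move=> U xs ys E.
suff H : index x s = index y s by rewrite -(nth_index x xs) -(nth_index x ys) H.
apply/eqP; rewrite -(@nth_uniq _ (f x) (map f s)) ?size_map ?index_mem //.
by rewrite !(nth_map x) ?index_mem // !nth_index // E.
Qed.

Definition pairs (l : seq nat) : seq (bool * nat) :=
  flatten [seq [:: (true, i); (false, i)] | i <- l].

Lemma mem_pairs l b i : (b, i) \in pairs l -> i \in l.
Proof.
elim: l => //= a l IH; rewrite /pairs /= !inE => /orP[/eqP[_ ->]|/orP[/eqP[_ ->]|]].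
- by rewrite eqxx. - by rewrite eqxx.
by move/IH ->; rewrite orbT.
Qed.

Lemma uniq_pairs l : uniq l -> uniq (pairs l).
Proof.
elim: l => // a l IH /= /andP[al ul].
have H : forall b, (b, a) \notin pairs l.
  by move=> b; apply/negP => /mem_pairs; rewrite (negbTE al).
rewrite -/(pairs l) inE negb_or H H IH // !andbT.
Qed.

Lemma events_pairs (R : realDomainType) (I : seq (R * R)) :
  perm_eq (events I) (pairs (iota 0 (size I))).
Proof.
rewrite /events; have -> : pairs (iota 0 (size I)) = map snd (raw_events I).
  rewrite /raw_events map_flatten -map_comp /pairs; congr flatten; exact: eq_map.
by apply: perm_map; rewrite perm_sort.
Qed.


Definition occ (cls : seq bool) (cs : seq (seq nat)) x b :=
  count (fun p : bool * seq nat => (p.1 == b) && (x \in p.2)) (zip cls cs).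

Definition w (st : cstate) cls (es : seq (bool * nat)) x b :=
  occ cls (st_cstr st) x b + ((x \in st_act st) && (st_ph st == b)) + ((b, x) \in es).

Lemma occ_cat (cls : seq bool) (cs : seq (seq nat)) cls2 cs2 (x : nat) (b : bool) : size cls = size cs ->
  occ (cls ++ cls2) (cs ++ cs2) x b = occ cls cs x b + occ cls2 cs2 x b.
Proof. by move=> H; rewrite /occ zip_cat // count_cat. Qed.

Lemma occ0 (cls : seq bool) (cs : seq (seq nat)) (x : nat) (b : bool) : (forall s, s \in cs -> x \notin s) -> occ cls cs x b = 0.
Proof.
elim: cls cs => [|c cls IH] [|s cs] // H; rewrite /occ /= in IH *.
rewrite IH; last by move=> s' Hs'; apply: H; rewrite inE Hs' orbT.
by rewrite (negbTE (H s (mem_head _ _))) andbF.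
Qed.

Record Inv (k n : nat) (st : cstate) (cls : seq bool) (es : seq (bool * nat)) : Prop := {
  i_sz : size cls = size (st_cstr st);
  i_w : forall x b, w st cls es x b <= 1;
  i_n : n <= st_cnt st;
  i_act : forall x, x \in st_act st -> x < st_cnt st;
  i_cs : forall s, s \in st_cstr st -> [/\ uniq s, size s <= k & forall x, x \in s -> x < st_cnt st];
  i_uact : uniq (st_act st);
  i_kact : size (st_act st) < k;
  i_ues : uniq es;
  i_es : forall b i, (b, i) \in es -> i < n }.

Lemma close_inv k n cnt act ph cs cls es : 0 < k ->
  size cls = size cs ->
  (forall x b, w (CState cnt act ph cs) cls es x b <= 1) ->
  n <= cnt -> (forall x, x \in act -> x < cnt) ->
  (forall s, s \in cs -> [/\ uniq s, size s <= k & forall x, x \in s -> x < cnt]) ->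
  uniq act -> size act <= k -> uniq es -> (forall b i, (b, i) \in es -> i < n) ->
  let st' := close_if_full k (CState cnt act ph cs) in
  Inv k n st' (cls ++ nseq (size (st_cstr st') - size cs) (st_ph st')) es.
Proof.
move=> k0 Hsz Hw Hn Hact Hcs Hu Hk Hues Hes; rewrite /close_if_full /=.
case: eqP => Hk'.
  have -> : size (rcons cs act) - size cs = 1 by rewrite size_rcons subSnn.
  split => //=.
  - by rewrite size_cat /= Hsz size_rcons addn1.
  - move=> x b; have := Hw x b; rewrite /w /= -cats1 occ_cat //= addn0.
    by rewrite /occ /= addn0 andbC.
  - move=> s; rewrite mem_rcons inE => /orP[/eqP->|/Hcs//].
    by split => //; rewrite Hk'.
rewrite /= subnn cats0; split => //=.
by rewrite ltn_neqAle Hk andbT; apply/eqP.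
Qed.

Definition stepx k (p : cstate * seq bool) (e : bool * nat) :=
  let st := p.1 in let cls := p.2 in let st' := step k st e in
  (st', if (st_act st != [::]) && (e.1 != st_ph st)
        then cls ++ [:: st_ph st; ~~ st_ph st]
        else cls ++ nseq (size (st_cstr st') - size (st_cstr st)) (st_ph st')).

Lemma foldl_stepx k p es : (foldl (stepx k) p es).1 = foldl (step k) p.1 es.
Proof. by elim: es p => //= e es IH p; rewrite IH. Qed.

Lemma step_inv k n st cls e es : 0 < k -> Inv k n st cls (e :: es) ->
  Inv k n (stepx k (st, cls) e).1 (stepx k (st, cls) e).2 es.
Proof.
move=> k0; case: st => cnt act ph cs; case: e => b i.
case=> /= Hsz Hw Hn Hact Hcs Hu Hk /andP[bies Hues] Hes.
have iI : i < n by apply: (Hes b); rewrite mem_head.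
have Hes' : forall b i, (b, i) \in es -> i < n.
  by move=> b' i' H; apply: (Hes b'); rewrite inE H orbT.
rewrite /stepx /step /=.
case: (eqVneq act [::]) => Ha.
  subst act => /=.
  apply: close_inv => //=.
  - move=> x b'; have := Hw x b'; rewrite /w /= !inE.
    case: (eqVneq x i) => [->|xi]; case: (eqVneq b b') => [<-|bb] //=.
    + rewrite (negbTE bies) eqxx /=; lia.
    + rewrite xpair_eqE eqxx andbT (eq_sym b') (negbTE bb) /=; lia.
    + rewrite xpair_eqE (negbTE xi) andbF /=; lia.
    + rewrite xpair_eqE (negbTE xi) andbF /=; lia.
  - by move=> x; rewrite inE => /eqP ->; lia.
case: (eqVneq b ph) => Hb.
  subst b => /=.
  have iact : i \notin act.
    apply/negP => H; have := Hw i ph; rewrite /w /= H eqxx inE eqxx /=; lia.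
  apply: close_inv => //=.
  - move=> x b'; have := Hw x b'; rewrite /w /= mem_rcons !inE.
    case: (eqVneq x i) => [->|xi]; case: (eqVneq ph b') => [<-|bb] //=.
    + rewrite (negbTE bies) (negbTE iact) eqxx /=; lia.
    + rewrite xpair_eqE eqxx andbT (eq_sym b') (negbTE bb) /=; lia.
    + rewrite xpair_eqE (negbTE xi) andbF /=; lia.
    + rewrite xpair_eqE (negbTE xi) andbF /=; lia.
  - by move=> x; rewrite mem_rcons inE => /orP[/eqP ->|/Hact//]; lia.
  - by rewrite rcons_uniq iact.
  - by rewrite size_rcons.
have bE : b = ~~ ph by move: Hb; case: (b); case: (ph).
have j1 : 0 < size act by case: (act) Ha.
rewrite /=.
set j := size act; set xs := iota cnt (k - j); set ys := iota (cnt + (k - j)) j.-1.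
have Hx : forall x, x \in xs -> cnt <= x < cnt + (k - j) by move=> x; rewrite mem_iota.
have Hy : forall x, x \in ys -> cnt + (k - j) <= x < cnt + (k - j) + j.-1.
  by move=> x; rewrite mem_iota.
have Hi : i < cnt by lia.
split => /=.
- by rewrite !size_cat Hsz.
- move=> x b'; rewrite /w /= occ_cat //= /occ /= -/(occ cls cs x b').
  case: (ltnP x cnt) => xc.
    have xxs : x \notin xs by apply/negP => /Hx; lia.
    have xys : x \notin ys by apply/negP => /Hy; lia.
    rewrite !mem_cat (negbTE xxs) (negbTE xys) inE /= (negbTE xxs) !orbF.
    have := Hw x b'; rewrite /w /= inE xpair_eqE bE.
    have hd : (x == i) && (b' == ~~ ph) -> ((b', x) \in es) = false.
      by case/andP => /eqP-> /eqP->; rewrite -bE (negbTE bies).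
    move: hd; move: (x \in act) (x == i) ((b', x) \in es) (occ cls cs x b') => a c d o.
    by case: (ph); case: (b'); case: a; case: c; case: d => /=; intros; lia.
  have xa : x \notin act by apply/negP => /Hact; lia.
  have xi : x != i by apply/eqP => E; lia.
  have xe : (b', x) \notin es by apply/negP => /Hes'; lia.
  rewrite occ0; last by move=> s Hs; apply/negP => /(proj2 (proj2 (and3_ind (fun a b c => conj a (conj b c)) (Hcs s Hs)))); lia.
  rewrite !mem_cat inE (negbTE xa) (negbTE xi) (negbTE xe) /=.
  have dj : ~~ ((x \in xs) && (x \in ys)).
    by apply/negP => /andP[/Hx h1 /Hy h2]; lia.
  move: (x \in xs) (x \in ys) dj => a c.
  by case: (ph); case: (b'); case: a; case: c => /=; lia.
- lia.
- by move=> x /Hy; lia.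
- move=> s; rewrite mem_cat !inE => /orP[/Hcs [u1 u2 u3]|/orP[/eqP->|/eqP->]].
  + by split => // x /u3; lia.
  + split.
    * rewrite cat_uniq Hu iota_uniq andbT /=; apply/hasPn => x /Hx h.
      by apply/negP => /Hact; lia.
    * rewrite size_cat size_iota; lia.
    * by move=> x; rewrite mem_cat => /orP[/Hact|/Hx]; lia.
  + split.
    * rewrite cat_uniq iota_uniq /= iota_uniq andbT.
      have -> : i \in xs = false by apply/negP => /Hx; lia.
      rewrite andbT negb_or; apply/andP; split.
        by apply/negP => /Hy; lia.
      by apply/hasPn => x /Hx h; apply/negP => /Hy; lia.
    * rewrite size_cat /= size_iota size_iota; lia.
    * by move=> x; rewrite mem_cat inE => /orP[/Hy|/orP[/eqP->|/Hx]]; lia.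
- by rewrite iota_uniq.
- by rewrite size_iota; lia.
- done.
- done.
Qed.


Lemma coloring_proper k (S : seq (seq nat)) (X : seq nat) (c : nat -> 'I_k) :
  constraint_coloring S c -> proper_edge_coloring S X c.
Proof.
move=> Hc x y _ _ _ _ xy [i [xi yi]]; apply/eqP => E.
by move/eqP: xy; apply; apply: (uniq_map_inj _ _ _ _ _ _ (Hc i) xi yi E).
Qed.

Lemma coloring_ext k (S : seq (seq nat)) (X : seq nat) (f : nat -> 'I_k) : 0 < k ->
  (forall s, s \in S -> [/\ uniq s, size s <= k & {subset s <= X}]) ->
  proper_edge_coloring S X f ->
  exists c : nat -> 'I_k, constraint_coloring S c /\
    forall x, x \in X -> is_edge S x -> c x = f x.
Proof.
move=> k0 HS Hf.
pose d : 'I_k := Ordinal k0.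
pose edgeb x := [exists i : 'I_(size S), exists j : 'I_(size S),
   (i != j) && (x \in nth [::] S i) && (x \in nth [::] S j)].
have edgebP : forall x, reflect (is_edge S x) (edgeb x).
  move=> x; apply: (iffP existsP).
    by case=> i /existsP[j /andP[/andP[h1 h2] h3]]; exists i, j.
  by case=> i [j [h1 [h2 h3]]]; exists i; apply/existsP; exists j; rewrite h1 h2 h3.
pose U s := [seq f y | y <- s & edgeb y].
pose free s := enum [pred c : 'I_k | c \notin U s].
pose nonE s := [seq y <- s | ~~ edgeb y].
pose c x := if edgeb x then f x else
  let s := nth [::] S (find (fun s => x \in s) S) in nth d (free s) (index x (nonE s)).
exists c; split; last by move=> x _ /edgebP h; rewrite /c h.
move=> i; set s := nth [::] S i.
have sS : s \in S by apply: mem_nth.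
have [us ks sX] := HS s sS.
have Hfind : forall x, x \in s -> ~~ edgeb x ->
    nth [::] S (find (fun s => x \in s) S) = s.
  move=> x xs ne.
  have hs : has (fun s => x \in s) S by apply/hasP; exists s.
  have i0lt := hs; rewrite has_find in i0lt.
  have xi0 := nth_find [::] hs.
  case: (eqVneq (find (fun s => x \in s) S) (nat_of_ord i)) => [->//|neq].
  case/negP: ne; apply/edgebP; exists (Ordinal i0lt), i; split => //.
have Uinj : {in [seq y <- s | edgeb y] &, injective f}.
  move=> x y; rewrite !mem_filter => /andP[ex xs] /andP[ey ys] E.
  case: (eqVneq x y) => // xy; exfalso.
  have := Hf x y (sX _ xs) (sX _ ys) (elimT (edgebP x) ex) (elimT (edgebP y) ey) xy
    (ex_intro (fun j : 'I_(size S) => x \in nth [::] S j /\ y \in nth [::] S j) i (conj xs ys)).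
  by rewrite E eqxx.
have uU : uniq (U s) by rewrite map_inj_in_uniq // filter_uniq.
have sizeF : size (nonE s) <= size (free s).
  rewrite /free -cardE.
  have := cardC (mem (U s)); rewrite card_ord.
  move/card_uniqP: uU => ->.
  have -> : #|[pred c0 : 'I_k | c0 \notin U s]| = #|[predC mem (U s)]|.
    by apply: eq_card => z.
  have h := count_predC edgeb s.
  rewrite /U size_map /nonE !size_filter.
  have e : count (fun y => ~~ edgeb y) s = count (predC edgeb) s by [].
  change (count edgeb s + #|[predC mem (U s)]| = k -> count (predC edgeb) s <= #|[predC mem (U s)]|). lia.
have uF : uniq (free s) by apply: enum_uniq.
have Hc : forall x, x \in s -> ~~ edgeb x ->
    c x = nth d (free s) (index x (nonE s)).
  by move=> x xs ne; rewrite /c (negbTE ne) Hfind.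
have idx : forall x, x \in s -> ~~ edgeb x -> index x (nonE s) < size (free s).
  move=> x xs ne; apply: leq_trans sizeF.
  by rewrite index_mem mem_filter ne.
rewrite map_inj_in_uniq // => x y xs ys.
case: (boolP (edgeb x)) => ex; case: (boolP (edgeb y)) => ey.
- by rewrite /c ex ey => E; apply: Uinj => //; rewrite mem_filter ?ex ?ey.
- rewrite (Hc y) // /c ex => E.
  have := mem_nth d (idx y ys ey); rewrite -E mem_enum inE.
  by rewrite map_f // mem_filter ex.
- rewrite (Hc x) // /c ey => E.
  have := mem_nth d (idx x xs ex); rewrite E mem_enum inE.
  by rewrite map_f // mem_filter ey.
- rewrite (Hc x) // (Hc y) // => /eqP.
  rewrite nth_uniq ?idx // => /eqP E.
  have xn : x \in nonE s by rewrite mem_filter ex.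
  have yn : y \in nonE s by rewrite mem_filter ey.
  by rewrite -(nth_index 0 xn) -(nth_index 0 yn) E.
Qed.


Lemma count2 (T : eqType) (P : pred T) (s : seq T) x0 i j :
  i < size s -> j < size s -> i != j -> P (nth x0 s i) -> P (nth x0 s j) ->
  1 < count P s.
Proof.
elim: s i j => [|a s IH] [|i] [|j] //=.
- move=> _ jl _ Pa Pj; rewrite Pa add1n ltnS -has_count.
  by apply/(has_nthP x0); exists j.
- move=> il _ _ Pi Pa; rewrite Pa add1n ltnS -has_count.
  by apply/(has_nthP x0); exists i.
- move=> il jl ij Pi Pj; have := IH i j il jl ij Pi Pj; lia.
Qed.

Lemma fold_inv k n p es : 0 < k -> Inv k n p.1 p.2 es ->
  Inv k n (foldl (stepx k) p es).1 (foldl (stepx k) p es).2 [::].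
Proof.
move=> k0; elim: es p => [|e es IH] [st cls] //= H.
by apply: IH; apply: step_inv.
Qed.

Theorem lemma4 (R : realDomainType) (I : seq (R * R)) (k : nat) :
  (0 < k)%N ->
  (forall p, p \in I -> (p.1 <= p.2)%R) ->
  uniq (flatten [seq [:: p.1; p.2] | p <- I]) ->
  let X := ground k I in
  let S := constraints k I in
  (* every element of X occurs in at most two constraints *)
  (forall x, x \in X -> #|[set i : 'I_(size S) | x \in nth [::] S i]| <= 2)%N /\
  (* S can be split in two classes, separating the two constraints of each element *)
  (exists part : 'I_(size S) -> bool,
     forall x, x \in X -> forall i j : 'I_(size S), i != j ->
       x \in nth [::] S i -> x \in nth [::] S j -> part i != part j) /\
  (* hence the multigraph is bipartite *)
  mg_bipartite S X /\
  (* proper k-edge-colorings correspond to constraint colorings of X *)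
  (forall c : nat -> 'I_k, constraint_coloring S c -> proper_edge_coloring S X c) /\
  (forall f : nat -> 'I_k, proper_edge_coloring S X f ->
     exists c : nat -> 'I_k, constraint_coloring S c /\
       forall x, x \in X -> is_edge S x -> c x = f x).
Proof.
move=> k0 _ _ X S.
pose p0 := (CState (size I) [::] true [::], [::] : seq bool).
have H0 : Inv k (size I) p0.1 p0.2 (events I).
  have Pe := events_pairs _ I.
  split => //=.
  - move=> x b; rewrite /w /= /occ /=; case: (_ \in _) => //.
  - by rewrite (perm_uniq Pe); apply: uniq_pairs; exact: iota_uniq.
  - move=> b i; rewrite (perm_mem Pe) => /mem_pairs; rewrite mem_iota; lia.
have HF := fold_inv _ _ _ _ k0 H0.
rewrite foldl_stepx /= in HF.
set cls := (foldl (stepx k) p0 (events I)).2 in HF.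
have eS : st_cstr (foldl (step k) (CState (size I) [::] true [::]) (events I)) = S by [].
have eX : iota 0 (st_cnt (foldl (step k) (CState (size I) [::] true [::]) (events I))) = X by [].
case: HF; rewrite eS => Hsz Hw _ _ Hcs _ _ _ _.
move: eX Hcs; set cnt := st_cnt _ => eX Hcs.
pose part (i : 'I_(size S)) := nth false cls i.
have Hpart : forall x (i j : 'I_(size S)), i != j ->
    x \in nth [::] S i -> x \in nth [::] S j -> part i != part j.
  move=> x i j ij xi xj; apply/negP => /eqP E.
  have := Hw x (part i); rewrite /w /= eS => H.
  suff : 1 < occ cls S x (part i) by lia.
  rewrite /occ; apply: (@count2 _ _ _ (false, [::]) i j).
  - by rewrite size_zip Hsz minnn.
  - by rewrite size_zip Hsz minnn.
  - done.
  - by rewrite nth_zip //= eqxx.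
  - by rewrite nth_zip //= E eqxx.
have Hbip : exists part : 'I_(size S) -> bool,
     forall x, x \in X -> forall i j : 'I_(size S), i != j ->
       x \in nth [::] S i -> x \in nth [::] S j -> part i != part j.
  by exists part => x _; apply: Hpart.
split.
  move=> x _; rewrite -[2]card_bool.
  apply: (@leq_card_in _ _ part) => i j; rewrite !inE => xi xj E.
  case: (eqVneq i j) => // ij; exfalso.
  by have := Hpart x i j ij xi xj; rewrite E eqxx.
split; first exact: Hbip.
split; first by case: Hbip => q Hq; exists q => x xX _; apply: Hq.
split; first by move=> c; apply: coloring_proper.
move=> f Hf; apply: coloring_ext => // s sS.
have [u1 u2 u3] := Hcs s sS; split => // x /u3 h.
by rewrite -eX mem_iota.
Qed.
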